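(* Let $\mathcal G$ be a finite connected groupoid and $\alpha=(S_g,\alpha_g)_{g\in\mathcal G}$ a unital group-type partial action of $\mathcal G$ on a ring $S=\bigoplus_{y\in\mathcal G_0}S_y$, with $S_g=S1_g$. Let $\mathcal H$ be a subgroupoid of $\mathcal G$ such that the restricted partial action $\alpha_{\mathcal H}$ is group-type, let $\mathcal H=\mathcal H_1\,\dot\cup\cdots\dot\cup\,\mathcal H_r$ be its decomposition into connected components with object sets $Y_1,\dots,Y_r$ (so $\mathcal H_0=Y_1\,\dot\cup\cdots\dot\cup\,Y_r$), let $S_j=\bigoplus_{y\in Y_j}S_y$, $S^c_{\mathcal H}=\bigoplus_{y\in\mathcal G_0\setminus\mathcal H_0}S_y$, and choose $y_j\in Y_j$ for each $j$. Then $$S^{\alpha_{\mathcal H}}=\Big(\bigoplus_{j=1}^r S_j^{\alpha_{\mathcal H_j}}\Big)\oplus S^c_{\mathcal H}\;\simeq\;\Big(\bigoplus_{j=1}^r S_{y_j}^{\alpha_{\mathcal H_j(y_j)}}\Big)\oplus S^c_{\mathcal H}.$$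
   Context: A groupoid is a small category with all morphisms invertible; $\mathcal G_0$ is the set of objects (identified with identity morphisms), $s(g),t(g)$ source and target, $\mathcal G(x,y)=\{g:s(g)=x,t(g)=y\}$, $\mathcal G(x)=\mathcal G(x,x)$; $gh$ is defined iff $s(g)=t(h)$; connected means all $\mathcal G(x,y)\ne\emptyset$; connected components are the full subgroupoids on classes of $x\sim y\iff\mathcal G(x,y)\ne\emptyset$. A partial action $\alpha=(S_g,\alpha_g)_{g\in\mathcal G}$ on a ring $S$: for each $g$, $S_{t(g)}$ is an ideal of $S$, $S_g$ an ideal of $S_{t(g)}$, $\alpha_g:S_{g^{-1}}\to S_g$ a ring isomorphism; $\alpha_x=\mathrm{id}_{S_x}$ for $x\in\mathcal G_0$; for composable $(g,h)$, $\alpha_h^{-1}(S_{g^{-1}}\cap S_h)\subseteq S_{(gh)^{-1}}$ and $\alpha_g\alpha_h(a)=\alpha_{gh}(a)$ there. Unital: $S_g=S1_g$, $1_g$ central idempotent. A transversal for $x$ in a connected groupoid $\mathcal K$ is $\{\tau_y\}_{y\in\mathcal K_0}$, $\tau_y\in\mathcal K(x,y)$, $\tau_x=x$; a partial action of connected $\mathcal K$ on $A=\bigoplus_{y\in\mathcal K_0}A_y$ is group-type if some $x$ and transversal satisfy $A_{\tau_y^{-1}}=A_x$, $A_{\tau_y}=A_y$ for all $y$; a partial action of a non-connected groupoid on such a direct sum is group-type if its restriction to each connected component $\mathcal K_Y$, acting on $\bigoplus_{y\in Y}A_y$, is group-type. For a subgroupoid $\mathcal H$, $\alpha_{\mathcal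 H}=(S_h,\alpha_h)_{h\in\mathcal H}$ is the restricted partial action on $\bigoplus_{z\in\mathcal H_0}S_z$, and $\alpha_{\mathcal H_j}$, $\alpha_{\mathcal H_j(y_j)}$ are the restrictions to $\mathcal H_j$ (on $S_j$) and to $\mathcal H_j(y_j)$ (on $S_{y_j}$). For a subgroupoid $\mathcal K$ and a subring $A\subseteq S$, $A^{\alpha_{\mathcal K}}=\{a\in A:\alpha_k(a1_{k^{-1}})=a1_k\ \forall k\in\mathcal K\}$; in particular $S^{\alpha_{\mathcal H}}$ consists of elements of all of $S$. *)

(* Defs.v *)
From HB Require Import structures.
From mathcomp Require Import all_boot all_order all_algebra.
Set Implicit Arguments. Unset Strict Implicit. Unset Printing Implicit Defensive.
Import GRing.Theory.
Local Open Scope ring_scope.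

(* A finite groupoid: finite type of objects, finite type of morphisms.
   [gcomp g h] is the composite gh (meaningful when src g = tgt h). *)
Record groupoid := Groupoid {
  gObj : finType;
  gMor : finType;
  src : gMor -> gObj;
  tgt : gMor -> gObj;
  idm : gObj -> gMor;
  ginv : gMor -> gMor;
  gcomp : gMor -> gMor -> gMor;
  src_idm : forall x, src (idm x) = x;
  tgt_idm : forall x, tgt (idm x) = x;
  src_comp : forall g h, src g = tgt h -> src (gcomp g h) = src h;
  tgt_comp : forall g h, src g = tgt h -> tgt (gcomp g h) = tgt g;
  compA : forall g h k, src g = tgt h -> src h = tgt k ->
            gcomp g (gcomp h k) = gcomp (gcomp g h) k;
  comp_idl : forall g, gcomp (idm (tgt g)) g = g;
  comp_idr : forall g, gcomp g (idm (src g)) = g;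
  src_inv : forall g, src (ginv g) = tgt g;
  tgt_inv : forall g, tgt (ginv g) = src g;
  comp_inv_r : forall g, gcomp g (ginv g) = idm (tgt g);
  comp_inv_l : forall g, gcomp (ginv g) g = idm (src g)
}.

Definition gconnected (G : groupoid) : Prop :=
  forall x y : gObj G, exists g : gMor G, src g = x /\ tgt g = y.

Section PA.
Variables (G : groupoid) (S : pzRingType).

Definition inIdeal (e a : S) : Prop := exists b : S, a = b * e.

Definition ring_iso_on (I J : S -> Prop) (f : S -> S) : Prop :=
  [/\ (forall a, I a -> J (f a)),
      (forall a b, I a -> I b -> f (a + b) = f a + f b),
      (forall a b, I a -> I b -> f (a * b) = f a * f b),
      (forall a b, I a -> I b -> f a = f b -> a = b) &
      (forall c, J c -> exists a, I a /\ f a = c)].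

(* Unital partial action (S_g = S e g, e g central idempotent) on
   S = \bigoplus_{y in G_0} S_y, with S_y = S e (idm y). *)
Definition unital_partial_action (e : gMor G -> S) (alpha : gMor G -> S -> S)
  : Prop :=
  [/\ (forall g, e g * e g = e g /\ forall a, a * e g = e g * a),
      (forall x y : gObj G, x != y -> e (idm x) * e (idm y) = 0),
      \sum_(y : gObj G) e (idm y) = 1 &
      (forall g, e g * e (idm (tgt g)) = e g)] /\
  [/\
      (forall g, ring_iso_on (inIdeal (e (ginv g))) (inIdeal (e g)) (alpha g)),
      (forall x a, inIdeal (e (idm x)) a -> alpha (idm x) a = a) &
      (forall g h, src g = tgt h -> forall a,
          inIdeal (e (ginv h)) a -> inIdeal (e (ginv g)) (alpha h a) ->
          inIdeal (e (ginv (gcomp g h))) a /\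
          alpha g (alpha h a) = alpha (gcomp g h) a)].

Definition group_type (e : gMor G -> S) : Prop :=
  exists (x : gObj G) (tau : gObj G -> gMor G),
    tau x = idm x /\
    forall y, [/\ src (tau y) = x, tgt (tau y) = y,
                  e (ginv (tau y)) = e (idm x) & e (tau y) = e (idm y)].

Definition subgroupoid (H : {set gMor G}) : Prop :=
  (forall g h, g \in H -> h \in H -> src g = tgt h -> gcomp g h \in H) /\
  (forall g, g \in H -> ginv g \in H).

Definition sobj (H : {set gMor G}) : {set gObj G} := [set x | idm x \in H].

Definition hconn (H : {set gMor G}) (x y : gObj G) : bool :=
  [exists h in H, (src h == x) && (tgt h == y)].

Definition comp_of (H : {set gMor G}) (y : gObj G) : {set gObj G} :=
  [set z | hconn H y z].

Definition comp_mor (H : {set gMor G}) (Y : {set gObj G}) : {set gMor G} :=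
  [set h in H | src h \in Y].

Definition isotropy (H : {set gMor G}) (y : gObj G) : {set gMor G} :=
  [set h in H | (src h == y) && (tgt h == y)].

(* alpha_H is group-type: group-type on every connected component *)
Definition group_type_sub (e : gMor G -> S) (H : {set gMor G}) : Prop :=
  forall y, y \in sobj H ->
    exists (x : gObj G) (tau : gObj G -> gMor G),
      x \in comp_of H y /\ tau x = idm x /\
      forall z, z \in comp_of H y ->
        [/\ tau z \in comp_mor H (comp_of H y), src (tau z) = x, tgt (tau z) = z,
            e (ginv (tau z)) = e (idm x) & e (tau z) = e (idm z)].

Definition representatives (H : {set gMor G}) (R : {set gObj G}) : Prop :=
  [/\ (forall y, y \in R -> y \in sobj H),
      (forall z, z \in sobj H -> exists y, y \in R /\ hconn H y z) &
      (forall y y', y \in R -> y' \in R -> hconn H y y' -> y = y')].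

Definition fixed_by (e : gMor G -> S) (alpha : gMor G -> S -> S)
  (K : {set gMor G}) (a : S) : Prop :=
  forall k, k \in K -> alpha k (a * e (ginv k)) = a * e k.

Definition blockid (e : gMor G -> S) (Y : {set gObj G}) : S :=
  \sum_(z in Y) e (idm z).

Definition comp_inv (e : gMor G -> S) (alpha : gMor G -> S -> S)
  (H : {set gMor G}) (Y : {set gObj G}) (a : S) : Prop :=
  inIdeal (blockid e Y) a /\ fixed_by e alpha (comp_mor H Y) a.

Definition loc_inv (e : gMor G -> S) (alpha : gMor G -> S -> S)
  (H : {set gMor G}) (y : gObj G) (a : S) : Prop :=
  inIdeal (e (idm y)) a /\ fixed_by e alpha (isotropy H y) a.

Definition compl_part (e : gMor G -> S) (H : {set gMor G}) (c : S) : Prop :=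
  inIdeal (blockid e [set z | z \notin sobj H]) c.

(* the (external) ring (\bigoplus_{y in R} S_y^{alpha_{H(y)}}) + S^c_H,
   realised as pairs (b, c) with b y = 0 off R *)
Definition dsum_target (e : gMor G -> S) (alpha : gMor G -> S -> S)
  (H : {set gMor G}) (R : {set gObj G}) (p : (gObj G -> S) * S) : Prop :=
  [/\ (forall y, y \in R -> loc_inv e alpha H y (p.1 y)),
      (forall y, y \notin R -> p.1 y = 0) &
      compl_part e H p.2].

Definition dsum_add (p q : (gObj G -> S) * S) : (gObj G -> S) * S :=
  (fun y => p.1 y + q.1 y, p.2 + q.2).
Definition dsum_mul (p q : (gObj G -> S) * S) : (gObj G -> S) * S :=
  (fun y => p.1 y * q.1 y, p.2 * q.2).
Definition dsum_one (e : gMor G -> S) (H : {set gMor G}) (R : {set gObj G})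
  : (gObj G -> S) * S :=
  (fun y => if y \in R then e (idm y) else 0,
   blockid e [set z | z \notin sobj H]).

End PA.

(* Main.v *)
Require Import Defs.
From HB Require Import structures.
From mathcomp Require Import all_boot all_order all_algebra.
From Stdlib Require Import IndefiniteDescription FunctionalExtensionality.
Import GRing.Theory.
Local Open Scope ring_scope.
Set Implicit Arguments. Unset Strict Implicit.



Section Gpd.
Variable G : groupoid.
Implicit Types g h k : gMor G.
Local Notation gcompA := Defs.compA.

Lemma ginvK g : ginv (ginv g) = g.
Proof.
rewrite -[ginv (ginv g)]comp_idr src_inv tgt_inv -comp_inv_l.
rewrite gcompA ?src_inv ?tgt_inv //.
by rewrite comp_inv_l src_inv comp_idl.
Qed.

Lemma ginvM g h : src g = tgt h -> ginv (gcomp g h) = gcomp (ginv h) (ginv g).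
Proof.
move=> sgh.
have pq : gcomp (gcomp g h) (gcomp (ginv h) (ginv g)) = idm (tgt g).
  rewrite -gcompA ?tgt_comp ?src_inv ?tgt_inv //.
  rewrite (@gcompA _ h) ?src_inv ?tgt_inv // comp_inv_r.
  by rewrite -sgh -(tgt_inv g) comp_idl comp_inv_r.
rewrite -[ginv (gcomp g h)]comp_idr src_inv tgt_comp // -pq.
rewrite gcompA ?src_inv ?tgt_comp ?src_comp ?tgt_inv ?sgh //.
rewrite comp_inv_l src_comp //.
have -> : idm (src h) = idm (tgt (gcomp (ginv h) (ginv g))).
  rewrite tgt_comp ?tgt_inv //; by rewrite ?src_inv ?tgt_inv.
all: by rewrite ?comp_idl ?src_inv.
Qed.

End Gpd.



Section Alg.
Variables (G : groupoid) (S : pzRingType) (e : gMor G -> S) (alpha : gMor G -> S -> S).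
Hypothesis UPA : unital_partial_action e alpha.
Local Notation gcompA := Defs.compA.
Local Notation E x := (e (idm x)).
Local Notation I := (@inIdeal S).
Implicit Types g h k u v t : gMor G.

Lemma eidem g : e g * e g = e g.
Proof. by case: UPA => [[A1 _ _ _] _]; case: (A1 g). Qed.
Lemma ecomm g a : a * e g = e g * a.
Proof. by case: UPA => [[A1 _ _ _] _]; case: (A1 g). Qed.
Lemma eorth x y : x != y -> E x * E y = 0.
Proof. by case: UPA => [[_ A2 _ _] _]; apply: A2. Qed.
Lemma esum : \sum_y E y = 1.
Proof. by case: UPA => [[_ _ A3 _] _]. Qed.
Lemma etgt g : e g * E (tgt g) = e g.
Proof. by case: UPA => [[_ _ _ A4] _]. Qed.
Lemma eiso g : ring_iso_on (I (e (ginv g))) (I (e g)) (alpha g).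
Proof. by case: UPA => [_ [B1 _ _]]. Qed.
Lemma alpha_id x a : I (E x) a -> alpha (idm x) a = a.
Proof. by case: UPA => [_ [_ B2 _]]; apply: B2. Qed.
Lemma alpha_comp g h : src g = tgt h -> forall a,
  I (e (ginv h)) a -> I (e (ginv g)) (alpha h a) ->
  I (e (ginv (gcomp g h))) a /\ alpha g (alpha h a) = alpha (gcomp g h) a.
Proof. by case: UPA => [_ [_ _ B3]]; apply: B3. Qed.

Lemma IP f a : f * f = f -> I f a <-> a = a * f.
Proof.
move=> ff; split; last by move=> ->; exists a.
by case=> b ->; rewrite -mulrA ff.
Qed.
Lemma IeP g a : I (e g) a <-> a = a * e g.
Proof. exact/IP/eidem. Qed.

Lemma esrc_inv g : e (ginv g) * E (src g) = e (ginv g).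
Proof. by rewrite -(tgt_inv g) etgt. Qed.

Lemma Isub f f' a : f * f' = f -> I f a -> I f' a.
Proof. by move=> ff' [b ->]; exists (b * f); rewrite -mulrA ff'. Qed.

Lemma Itgt g a : I (e g) a -> I (E (tgt g)) a.
Proof. exact/Isub/etgt. Qed.
Lemma Isrc g a : I (e (ginv g)) a -> I (E (src g)) a.
Proof. exact/Isub/esrc_inv. Qed.

Lemma iso_maps g a : I (e (ginv g)) a -> I (e g) (alpha g a).
Proof. by case: (eiso g) => m _ _ _ _; apply: m. Qed.
Lemma iso_mul g a b : I (e (ginv g)) a -> I (e (ginv g)) b ->
  alpha g (a * b) = alpha g a * alpha g b.
Proof. by case: (eiso g) => _ _ m _ _; apply: m. Qed.
Lemma iso_inj g a b : I (e (ginv g)) a -> I (e (ginv g)) b ->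
  alpha g a = alpha g b -> a = b.
Proof. by case: (eiso g) => _ _ _ m _; apply: m. Qed.
Lemma iso_surj g c : I (e g) c -> exists a, I (e (ginv g)) a /\ alpha g a = c.
Proof. by case: (eiso g) => _ _ _ _ m; apply: m. Qed.

Lemma Iself g : I (e g) (e g).
Proof. by exists 1; rewrite mul1r. Qed.

Lemma alpha_inv u a : I (e (ginv u)) a -> alpha (ginv u) (alpha u a) = a.
Proof.
move=> Ia.
have Ib : I (e (ginv (ginv u))) (alpha u a) by rewrite ginvK; apply: iso_maps.
have [_ ->] := @alpha_comp (ginv u) u (src_inv u) a Ia Ib.
by rewrite comp_inv_l alpha_id //; apply: Isrc.
Qed.

Definition full u := e (ginv u) = E (src u) /\ e u = E (tgt u).

Lemma fullV u : full u -> full (ginv u).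
Proof. by case=> h1 h2; split; rewrite ?ginvK ?src_inv ?tgt_inv. Qed.

Lemma F1 u g : full u -> src g = tgt u -> forall a,
  I (e (ginv (gcomp g u))) a <-> I (E (src u)) a /\ I (e (ginv g)) (alpha u a).
Proof.
move=> [fu1 fu2] sg a; split; last first.
  by case=> h1 h2; case: (@alpha_comp g u sg a) => //; rewrite fu1.
move=> Ia.
have Ia' : I (E (src u)) a.
  by move/Isrc: Ia; rewrite src_comp.
split=> //.
have Ib : I (e (ginv (ginv u))) (alpha u a) by rewrite ginvK; apply: iso_maps; rewrite fu1.
have := @alpha_comp (gcomp g u) (ginv u) _ (alpha u a) Ib.
rewrite alpha_inv ?fu1 //.
case=> //; first by rewrite src_comp // tgt_inv.
have -> : gcomp (gcomp g u) (ginv u) = g.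
  by rewrite -gcompA ?tgt_inv // comp_inv_r -sg comp_idr.
by move=> h _.
Qed.

Lemma F1eq u g a : full u -> src g = tgt u ->
  I (E (src u)) a -> I (e (ginv g)) (alpha u a) ->
  alpha (gcomp g u) a = alpha g (alpha u a).
Proof.
move=> [fu1 fu2] sg h1 h2.
by case: (@alpha_comp g u sg a) => //; rewrite fu1.
Qed.

Lemma F2 v g : full v -> src v = tgt g -> forall a,
  I (e (ginv (gcomp v g))) a <-> I (e (ginv g)) a.
Proof.
move=> [fv1 fv2] sv a; split; last first.
  move=> Ia; case: (@alpha_comp v g sv a) => //.
  by rewrite fv1 sv; apply/Itgt/iso_maps.
move=> Ia.
have Ib : I (e (ginv (ginv v))) (alpha (gcomp v g) a).
  by rewrite ginvK fv2 -(tgt_comp sv); apply/Itgt/iso_maps.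
have := @alpha_comp (ginv v) (gcomp v g) _ a Ia Ib.
case; first by rewrite src_inv tgt_comp.
by rewrite gcompA ?src_inv // comp_inv_l sv comp_idl.
Qed.

Lemma F2eq v g a : full v -> src v = tgt g -> I (e (ginv g)) a ->
  alpha (gcomp v g) a = alpha v (alpha g a).
Proof.
move=> [fv1 fv2] sv Ia; case: (@alpha_comp v g sv a) => //.
by rewrite fv1 sv; apply/Itgt/iso_maps.
Qed.


Lemma Elemma t1 t2 k : full t1 -> full t2 -> src t1 = src t2 ->
  src k = tgt t1 -> tgt k = tgt t2 ->
  alpha t1 (e (ginv (gcomp (ginv t2) (gcomp k t1)))) = e (ginv k).
Proof.
move=> ft1 ft2 s12 sk tk.
set m := gcomp (ginv t2) (gcomp k t1).
have ft2' := fullV ft2.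
have s2 : src (ginv t2) = tgt (gcomp k t1) by rewrite src_inv tgt_comp.
have Im : I (e (ginv (gcomp k t1))) (e (ginv m)) by apply/(F2 ft2' s2)/Iself.
move: Im => /(F1 ft1 sk) [Iy If].
set f := alpha t1 (e (ginv m)).
have Ik : I (e t1) (e (ginv k)) by rewrite ft1.2 -sk; apply/Isrc/Iself.
have [c0 [Ic0 hc0]] := iso_surj Ik.
have Ic0m : I (e (ginv m)) c0.
  apply/(F2 ft2' s2)/(F1 ft1 sk); split; first by rewrite -ft1.1.
  by rewrite hc0; apply: Iself.
have Iy' : I (e (ginv t1)) (e (ginv m)) by rewrite ft1.1.
have ekf : e (ginv k) = alpha t1 c0 * f.
  by rewrite -hc0 /f -iso_mul // -(IeP _ _ ).1.
have ff : f * f = f by rewrite /f -iso_mul // eidem.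
have -> : f = f * e (ginv k) by apply/IeP.
by rewrite ecomm {1}ekf -mulrA ff -ekf.
Qed.

Lemma transfer t1 t2 k w : full t1 -> full t2 -> src t1 = src t2 ->
  src k = tgt t1 -> tgt k = tgt t2 -> I (E (src t1)) w ->
  alpha (gcomp (ginv t2) (gcomp k t1)) (w * e (ginv (gcomp (ginv t2) (gcomp k t1))))
    = w * e (gcomp (ginv t2) (gcomp k t1)) ->
  alpha k (alpha t1 w * e (ginv k)) = alpha t2 w * e k.
Proof.
move=> ft1 ft2 s12 sk tk Iw.
set m := gcomp (ginv t2) (gcomp k t1) => hyp.
have ft2' := fullV ft2.
have s2 : src (ginv t2) = tgt (gcomp k t1) by rewrite src_inv tgt_comp.
set b := w * e (ginv m).
have Ib : I (e (ginv m)) b by exists w.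
have Ib1 : I (e (ginv (gcomp k t1))) b by apply/(F2 ft2' s2).
have [Iby Ibk] := (F1 ft1 sk b).1 Ib1.
move: hyp; rewrite /m (F2eq ft2' s2 Ib1) (F1eq ft1 sk Iby Ibk) -/m => hyp.
have Ic : I (e (ginv (ginv t2))) (alpha k (alpha t1 b)).
  by rewrite ginvK ft2.2 -tk; apply/Itgt/iso_maps.
have hc := alpha_inv Ic; rewrite hyp ginvK in hc.
have Iwt1 : I (e (ginv t1)) w by rewrite ft1.1.
have Iwt2 : I (e (ginv t2)) w by rewrite ft2.1 -s12.
have sm : src m = src t1 by rewrite /m !src_comp // ?tgt_comp // src_inv.
have tm : tgt m = src t2 by rewrite /m tgt_comp ?tgt_inv // src_inv tgt_comp.
have Iem : I (e (ginv t1)) (e (ginv m)).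
  by rewrite ft1.1 -sm; apply/Isrc/Iself.
have Iem2 : I (e (ginv t2)) (e m).
  by rewrite ft2.1 -tm; apply/Itgt/Iself.
have e1 : alpha t1 b = alpha t1 w * e (ginv k) by rewrite /b iso_mul // Elemma.
have E2 : alpha t2 (e m) = e k.
  have := @Elemma t2 t1 (ginv k) ft2 ft1 (esym s12).
  rewrite src_inv tgt_inv ginvK => /(_ tk sk) <-.
  congr (alpha t2 (e _)).
  have sk' : src (ginv k) = tgt t2 by rewrite src_inv.
  rewrite ginvM ?ginvK; last by rewrite src_inv tgt_comp // tgt_inv.
  rewrite ginvM ?ginvK //.
  by rewrite /m gcompA ?src_inv.
have e2 : alpha t2 (w * e m) = alpha t2 w * e k by rewrite iso_mul // E2.
by rewrite -e1 -e2 hc.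
Qed.

End Alg.


Section Blocks.
Variables (G : groupoid) (S : pzRingType) (e : gMor G -> S) (alpha : gMor G -> S -> S).
Hypothesis UPA : unital_partial_action e alpha.
Local Notation E x := (e (idm x)).
Local Notation I := (@inIdeal S).
Local Notation B := (blockid e).

Lemma EE w z : E w * E z = if w == z then E z else 0.
Proof.
case: eqP => [->|/eqP]; first exact: (eidem UPA).
exact: (eorth UPA).
Qed.

Lemma EB z (Y : {set gObj G}) : E z * B Y = if z \in Y then E z else 0.
Proof.
rewrite /blockid mulr_sumr; case: ifP => zY.
  rewrite (bigD1 z) //= (eidem UPA) big1 ?addr0 // => w /andP [_ wz].
  by rewrite EE eq_sym (negbTE wz).
by apply: big1 => w wY; rewrite EE; case: eqP => // ez; rewrite ez wY in zY.
Qed.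

Lemma Bcomm Y a : a * B Y = B Y * a.
Proof.
by rewrite /blockid mulr_sumr mulr_suml; apply: eq_bigr => z _; rewrite (ecomm UPA).
Qed.

Lemma BE z (Y : {set gObj G}) : B Y * E z = if z \in Y then E z else 0.
Proof. by rewrite -Bcomm EB. Qed.

Lemma Bidem Y : B Y * B Y = B Y.
Proof.
rewrite {1}/blockid mulr_suml; apply: eq_bigr => z zY.
by rewrite EB zY.
Qed.

Lemma Bdisj (Y1 Y2 : {set gObj G}) : (forall z, z \in Y1 -> z \in Y2 -> False) -> B Y1 * B Y2 = 0.
Proof.
move=> dis; rewrite {1}/blockid mulr_suml; apply: big1 => z zY.
by rewrite EB; case: ifP => // /(dis z zY).
Qed.

Lemma IBP Y a : I (B Y) a <-> a = a * B Y.
Proof. exact/IP/Bidem. Qed.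

Lemma Bsub (Y1 Y2 : {set gObj G}) : {subset Y1 <= Y2} -> B Y1 * B Y2 = B Y1.
Proof.
move=> sub; rewrite {1}/blockid mulr_suml; apply: eq_bigr => z zY.
by rewrite EB (sub _ zY).
Qed.

End Blocks.



Section Comp.
Variables (G : groupoid) (H : {set gMor G}) (R : {set gObj G}).
Hypothesis SH : subgroupoid H.
Hypothesis RH : representatives H R.

Lemma hconnP x y : reflect (exists h, [/\ h \in H, src h = x & tgt h = y]) (hconn H x y).
Proof.
apply: (iffP existsP) => [[h /andP [hH /andP [/eqP sh /eqP th]]]|[h [hH sh th]]].
  by exists h.
by exists h; rewrite hH sh th !eqxx.
Qed.

Lemma hconn_sym x y : hconn H x y -> hconn H y x.
Proof.
case/hconnP=> h [hH sh th]; apply/hconnP; exists (ginv h).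
by rewrite src_inv tgt_inv; split=> //; apply: SH.2.
Qed.

Lemma hconn_trans x y z : hconn H x y -> hconn H y z -> hconn H x z.
Proof.
case/hconnP=> h [hH sh th]; case/hconnP=> k [kH sk tk]; apply/hconnP.
have skh : src k = tgt h by rewrite sk.
exists (gcomp k h); rewrite src_comp // tgt_comp //; split=> //.
exact: SH.1.
Qed.

Lemma comp_sobj y z : z \in comp_of H y -> z \in sobj H.
Proof.
rewrite inE => /hconnP [h [hH sh th]]; rewrite inE -th -comp_inv_r.
by apply: SH.1 => //; [apply: SH.2 | rewrite tgt_inv].
Qed.

Lemma src_sobj k : k \in H -> src k \in sobj H.
Proof.
move=> kH; rewrite inE -comp_inv_l.
by apply: SH.1 => //; [apply: SH.2 | rewrite src_inv].
Qed.

Lemma comp_self y : y \in sobj H -> y \in comp_of H y.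
Proof.
rewrite !inE => yH; apply/hconnP; exists (idm y).
by rewrite src_idm tgt_idm.
Qed.

Lemma comp_uniq y y' z : y \in R -> y' \in R ->
  z \in comp_of H y -> z \in comp_of H y' -> y = y'.
Proof.
move=> yR y'R; rewrite !inE => h1 h2.
case: RH => _ _ u; apply: u => //.
exact: (hconn_trans h1 (hconn_sym h2)).
Qed.

Lemma comp_ex z : z \in sobj H -> exists y, y \in R /\ z \in comp_of H y.
Proof.
case: RH => _ ex _ /ex [y [yR hy]]; exists y; split=> //; by rewrite inE.
Qed.

Lemma comp_tgt y k : k \in H -> src k \in comp_of H y -> tgt k \in comp_of H y.
Proof.
move=> kH; rewrite !inE => hy; apply: (hconn_trans hy).
by apply/hconnP; exists k.
Qed.

Lemma R_sobj y : y \in R -> y \in sobj H.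
Proof. by case: RH => r _ _; apply: r. Qed.

Lemma comp_R y y' : y \in R -> y' \in R -> y' \in comp_of H y -> y' = y.
Proof.
move=> yR y'R h; apply/esym/(comp_uniq yR y'R h).
exact/comp_self/R_sobj.
Qed.

End Comp.

Section Decomp.
Variables (G : groupoid) (S : pzRingType) (e : gMor G -> S) (alpha : gMor G -> S -> S).
Hypothesis UPA : unital_partial_action e alpha.
Variables (H : {set gMor G}) (R : {set gObj G}).
Hypothesis SH : subgroupoid H.
Hypothesis RH : representatives H R.
Local Notation E x := (e (idm x)).
Local Notation B := (blockid e).
Local Notation Bc := (blockid e [set z | z \notin sobj H]).

Lemma decomp : \sum_(y in R) B (comp_of H y) + Bc = 1.
Proof.
rewrite -(esum UPA).
have -> : \sum_(y in R) B (comp_of H y) =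
          \sum_z (if z \in sobj H then E z else 0).
  rewrite /blockid.
  rewrite (eq_bigr (fun y => \sum_z if z \in comp_of H y then E z else 0));
    last by move=> y _; rewrite big_mkcond.
  rewrite exchange_big /=; apply: eq_bigr => z _.
  case: ifP => zH.
    have [y0 [y0R zy0]] := comp_ex RH zH.
    rewrite (bigD1 y0) //= zy0 big1 ?addr0 // => y /andP [yR ny].
    case: ifP => // zy; case/eqP: ny; exact: (comp_uniq SH RH yR y0R zy zy0).
  apply: big1 => y _; case: ifP => // /(comp_sobj SH); by rewrite zH.
rewrite /blockid [\sum_(z in _) _]big_mkcond -big_split /=.
by apply: eq_bigr => z _; rewrite inE; case: ifP; rewrite ?addr0 ?add0r.
Qed.

End Decomp.



Section Main.
Variables (G : groupoid) (S : pzRingType) (e : gMor G -> S) (alpha : gMor G -> S -> S).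
Hypothesis UPA : unital_partial_action e alpha.
Variables (H : {set gMor G}) (R : {set gObj G}).
Hypothesis SH : subgroupoid H.
Hypothesis GTS : group_type_sub e H.
Hypothesis RH : representatives H R.
Local Notation E x := (e (idm x)).
Local Notation I := (@inIdeal S).
Local Notation B := (blockid e).
Local Notation Bc := (blockid e [set z | z \notin sobj H]).

Lemma zero_gen (P Q x f : S) : x = x * P -> f = f * Q -> (forall a, a * Q = Q * a) ->
  P * Q = 0 -> x * f = 0.
Proof.
move=> hx hf cQ PQ.
by rewrite hx hf -mulrA (cQ f) (mulrA P) PQ mul0r mulr0.
Qed.

Lemma sum_pick (T : finType) (A : {set T}) i0 (x : T -> S) f : i0 \in A ->
  (forall i, i \in A -> i != i0 -> x i * f = 0) ->
  (\sum_(i in A) x i) * f = x i0 * f.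
Proof.
move=> iA h; rewrite mulr_suml (bigD1 i0) //= big1 ?addr0 // => i /andP [].
exact: h.
Qed.

Lemma zero_blk a f z (Y : {set gObj G}) : a = a * B Y -> f = f * E z -> z \notin Y -> a * f = 0.
Proof.
move=> ha hf zY; apply: (zero_gen ha hf); first exact: (ecomm UPA).
by rewrite (BE UPA) (negbTE zY).
Qed.

Lemma B_absorb f z (Y : {set gObj G}) : z \in Y -> f = f * E z -> B Y * f = f.
Proof.
move=> zY hf; rewrite hf (ecomm UPA) mulrA (BE UPA) zY.
by rewrite -(ecomm UPA).
Qed.

Lemma sum_at a_ c y0 f z :
  (forall y, y \in R -> I (B (comp_of H y)) (a_ y)) -> compl_part e H c ->
  y0 \in R -> z \in comp_of H y0 -> f = f * E z ->
  (\sum_(y in R) a_ y + c) * f = a_ y0 * f.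
Proof.
move=> ha hc y0R zy0 hf; rewrite mulrDl (sum_pick y0R).
  rewrite (@zero_blk c f z [set z | z \notin sobj H]) ?addr0 //.
    by apply/(IBP UPA).
  by rewrite inE negbK (comp_sobj SH zy0).
move=> y yR ny; apply: (@zero_blk _ f z (comp_of H y)) => //.
  exact/(IBP UPA)/ha.
by apply/negP => zy; case/eqP: ny; apply: (comp_uniq SH RH yR y0R zy zy0).
Qed.

Lemma fix_sum a_ c :
  (forall y, y \in R -> comp_inv e alpha H (comp_of H y) (a_ y)) -> compl_part e H c ->
  fixed_by e alpha H (\sum_(y in R) a_ y + c).
Proof.
move=> ha hc k kH.
have [y0 [y0R zy0]] := comp_ex RH (src_sobj SH kH).
have ha' : forall y, y \in R -> I (B (comp_of H y)) (a_ y) by move=> y /ha [].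
rewrite (sum_at ha' hc y0R zy0); last by rewrite (esrc_inv UPA).
rewrite (sum_at ha' hc y0R (comp_tgt SH kH zy0)); last by rewrite (etgt UPA).
by case: (ha y0 y0R) => _; apply; rewrite inE kH zy0.
Qed.

Lemma part1 a : fixed_by e alpha H a <->
      exists (a_ : gObj G -> S) (c : S),
        [/\ (forall y, y \in R -> comp_inv e alpha H (comp_of H y) (a_ y)),
            compl_part e H c &
            a = \sum_(y in R) a_ y + c].
Proof.
split; last by case=> a_ [c [h1 h2 ->]]; apply: fix_sum.
move=> fa; exists (fun y => a * B (comp_of H y)), (a * Bc); split.
- move=> y yR; split; first by exists a.
  move=> k; rewrite inE => /andP [kH sk].
  rewrite -!mulrA (B_absorb sk); last by rewrite (esrc_inv UPA).
  rewrite (B_absorb (comp_tgt SH kH sk)); last by rewrite (etgt UPA).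
  exact: fa.
- by exists a.
- by rewrite -mulr_sumr -mulrDr (decomp UPA SH RH) mulr1.
Qed.

Lemma extract a_ c y0 :
  (forall y, y \in R -> I (B (comp_of H y)) (a_ y)) -> compl_part e H c -> y0 \in R ->
  (\sum_(y in R) a_ y + c) * B (comp_of H y0) = a_ y0.
Proof.
move=> ha hc y0R.
have ha' : forall y, y \in R -> a_ y = a_ y * B (comp_of H y).
  by move=> y /ha /(IBP UPA).
have hc' : c = c * Bc by apply/(IBP UPA).
rewrite mulrDl (sum_pick y0R); last first.
  move=> y yR ny; rewrite (ha' y yR) -mulrA (Bdisj UPA) ?mulr0 //.
  by move=> z zy zy0; case/eqP: ny; apply: (comp_uniq SH RH yR y0R zy zy0).
rewrite -ha' //.
rewrite hc' -mulrA (Bdisj UPA) ?mulr0 ?addr0 //.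
by move=> z; rewrite inE => /negP nz /(comp_sobj SH).
Qed.

Lemma extractc a_ c :
  (forall y, y \in R -> I (B (comp_of H y)) (a_ y)) -> compl_part e H c ->
  (\sum_(y in R) a_ y + c) * Bc = c.
Proof.
move=> ha hc.
have ha' : forall y, y \in R -> a_ y = a_ y * B (comp_of H y).
  by move=> y /ha /(IBP UPA).
have hc' : c = c * Bc by apply/(IBP UPA).
rewrite mulrDl -hc' mulr_suml big1 ?add0r // => y yR.
rewrite (ha' y yR) -mulrA (Bdisj UPA) ?mulr0 //.
by move=> z /(comp_sobj SH) zH; rewrite inE zH.
Qed.

Lemma part1b (a_ b_ : gObj G -> S) (c d : S) :
      (forall y, y \in R -> inIdeal (blockid e (comp_of H y)) (a_ y)) ->
      (forall y, y \in R -> inIdeal (blockid e (comp_of H y)) (b_ y)) ->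
      compl_part e H c -> compl_part e H d ->
      \sum_(y in R) a_ y + c = \sum_(y in R) b_ y + d ->
      (forall y, y \in R -> a_ y = b_ y) /\ c = d.
Proof.
move=> ha hb hc hd eq; split.
  by move=> y yR; rewrite -(extract ha hc yR) -(extract hb hd yR) eq.
by rewrite -(extractc ha hc) -(extractc hb hd) eq.
Qed.


Lemma cidem_mul (f a b : S) : f * f = f -> (forall x, x * f = f * x) ->
  a * b * f = a * f * (b * f).
Proof.
move=> ff hc.
by rewrite (hc b) [RHS]mulrA -[a * f * f]mulrA ff -[RHS]mulrA -hc mulrA.
Qed.

Definition phimap (a : S) : (gObj G -> S) * S :=
  (fun y => if y \in R then a * E y else 0, a * Bc).

Lemma phi_target a : fixed_by e alpha H a -> dsum_target e alpha H R (phimap a).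
Proof.
move=> fa; split.
- move=> y yR /=; rewrite yR; split; first by exists a.
  move=> k; rewrite inE => /andP [kH /andP [/eqP sk /eqP tk]].
  rewrite -!mulrA -[E y * e (ginv k)](ecomm UPA) -[E y * e k](ecomm UPA).
  rewrite -{1}sk (esrc_inv UPA) -{1}tk (etgt UPA).
  exact: fa.
- by move=> y /negbTE /= ->.
- by exists a.
Qed.

Lemma phi_hom a b :
  phimap (a + b) = dsum_add (phimap a) (phimap b) /\
  phimap (a * b) = dsum_mul (phimap a) (phimap b).
Proof.
split; rewrite /phimap /dsum_add /dsum_mul /=; congr pair.
- by apply: functional_extensionality => y; case: ifP; rewrite ?mulrDl ?addr0.
- by rewrite mulrDl.
- apply: functional_extensionality => y; case: ifP; rewrite ?mulr0 // => _.
  by apply: cidem_mul; [apply: (eidem UPA) | apply: (ecomm UPA)].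
- by apply: cidem_mul; [apply: (Bidem UPA) | apply: (Bcomm UPA)].
Qed.

Lemma phi_one : phimap 1 = dsum_one e H R.
Proof.
rewrite /phimap /dsum_one mul1r; congr pair.
by apply: functional_extensionality => y; rewrite mul1r.
Qed.

Lemma tau_of y : y \in sobj H -> exists x (tau : gObj G -> gMor G),
  x \in comp_of H y /\ forall z, z \in comp_of H y ->
   [/\ tau z \in H, src (tau z) = x, tgt (tau z) = z & full e (tau z)].
Proof.
case/GTS=> x [tau [xy [_ ht]]]; exists x, tau; split=> // z zy.
case: (ht z zy); rewrite inE => /andP [tH _] st tt f1 f2.
by split=> //; split; rewrite ?st ?tt.
Qed.

Lemma phi_inj a b : fixed_by e alpha H a -> fixed_by e alpha H b ->
  phimap a = phimap b -> a = b.
Proof.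
move=> fa fb heq.
have h1 : forall y, y \in R -> a * E y = b * E y.
  by move=> y yR; have := congr1 (fun p => p.1 y) heq; rewrite /= yR.
have h2 : a * Bc = b * Bc by have := congr1 snd heq.
suff hz : forall z, a * E z = b * E z.
  rewrite -[a]mulr1 -[b]mulr1 -(esum UPA) !mulr_sumr.
  by apply: eq_bigr => z _.
move=> z; case: (boolP (z \in sobj H)) => zH; last first.
  have hE : Bc * E z = E z by rewrite (BE UPA) inE zH.
  by rewrite -hE !mulrA h2.
have [y [yR zy]] := comp_ex RH zH.
have [x [tau [xy ht]]] := tau_of (R_sobj RH yR).
have key : forall c, fixed_by e alpha H c -> forall w, w \in comp_of H y ->
    c * E w = alpha (tau w) (c * E x).
  move=> c fc w wy; case: (ht w wy) => tH st tt [f1 f2].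
  by have := fc _ tH; rewrite f1 f2 st tt => ->.
have yy := comp_self (R_sobj RH yR).
have ex : a * E x = b * E x.
  case: (ht y yy) => _ st _ [f1 _].
  apply: (iso_inj UPA (g := tau y)); rewrite ?f1 ?st; try by eexists.
  by rewrite -!key // h1.
by rewrite (key a fa z zy) ex -key.
Qed.


Lemma piece y q : y \in R -> loc_inv e alpha H y q ->
  exists ay, comp_inv e alpha H (comp_of H y) ay /\ ay * E y = q.
Proof.
move=> yR [Iq fq].
have [x [tau [xy ht]]] := tau_of (R_sobj RH yR).
have yy := comp_self (R_sobj RH yR).
have [tyH sty tty fty] := ht y yy.
set w := alpha (ginv (tau y)) q.
have ftyV := fullV fty.
have Iqq : I (e (ginv (ginv (tau y)))) q by rewrite ginvK fty.2 tty.
have Iw : I (E x) w.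
  by have := iso_maps UPA Iqq; rewrite fty.1 sty.
have fw : forall m, m \in H -> src m = x -> tgt m = x ->
    alpha m (w * e (ginv m)) = w * e m.
  move=> m mH sm tm.
  apply: (@transfer _ _ _ _ UPA (ginv (tau y)) (ginv (tau y)) m q ftyV ftyV erefl).
  - by rewrite tgt_inv sty sm.
  - by rewrite tgt_inv sty tm.
  - by rewrite src_inv tty.
  apply: fq; rewrite inE; apply/andP; split.
    apply: SH.1; first by rewrite ginvK.
      apply: SH.1 => //; first exact: SH.2.
      by rewrite tgt_inv sty sm.
    by rewrite ginvK tgt_comp; [rewrite sty tm | rewrite tgt_inv sty sm].
  rewrite src_comp ?src_comp ?src_inv ?tgt_comp ?tgt_inv ?ginvK ?tty ?sty ?sm ?tm //.
  by rewrite src_inv tty eqxx.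
set ay := \sum_(z in comp_of H y) alpha (tau z) w.
have Ix : forall z, z \in comp_of H y -> alpha (tau z) w = alpha (tau z) w * E z.
  move=> z zy; case: (ht z zy) => _ st tt [f1 f2].
  have : I (e (tau z)) (alpha (tau z) w) by apply: (iso_maps UPA); rewrite f1 st.
  by rewrite f2 tt => /(IeP UPA).
have hat : forall f z0, z0 \in comp_of H y -> f = f * E z0 ->
    ay * f = alpha (tau z0) w * f.
  move=> f z0 z0y hf; apply: sum_pick => // z zy nz.
  apply: (zero_gen (Ix z zy) hf); first exact: (ecomm UPA).
  exact: (eorth UPA).
exists ay; split; first split.
- apply/(IBP UPA); rewrite /ay mulr_suml; apply: eq_bigr => z zy.
  by rewrite {2}(Ix z zy) -mulrA (EB UPA) zy -(Ix z zy).
- move=> k; rewrite inE => /andP [kH sk].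
  have tk := comp_tgt SH kH sk.
  rewrite (hat _ _ sk); last by rewrite (esrc_inv UPA).
  rewrite (hat _ _ tk); last by rewrite (etgt UPA).
  have [t1H st1 tt1 ft1] := ht _ sk; have [t2H st2 tt2 ft2] := ht _ tk.
  apply: (transfer UPA ft1 ft2); rewrite ?st1 ?st2 ?tt1 ?tt2 //.
  apply: fw.
  + apply: SH.1; first exact: SH.2.
      by apply: SH.1 => //; rewrite tt1.
    by rewrite src_inv tgt_comp ?tt1 // tt2.
  + by rewrite !src_comp ?tgt_comp ?src_inv ?tt1 ?tt2.
  + by rewrite tgt_comp ?tgt_inv // src_inv tgt_comp ?tt1 // tt2.
- rewrite (hat _ _ yy); last by rewrite (eidem UPA).
  have := alpha_inv UPA Iqq; rewrite ginvK -/w => ->.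
  by apply/esym/(IeP UPA).
Qed.


Lemma phi_surj p : dsum_target e alpha H R p ->
  exists a, fixed_by e alpha H a /\ phimap a = p.
Proof.
case: p => p1 p2 [h1 h2 h3].
have : forall y, exists ay, y \in R ->
    comp_inv e alpha H (comp_of H y) ay /\ ay * E y = p1 y.
  move=> y; case: (boolP (y \in R)) => yR; last by exists 0.
  by have [ay hy] := piece yR (h1 y yR); exists ay.
case/functional_choice => a_ ha.
have hi : forall y, y \in R -> comp_inv e alpha H (comp_of H y) (a_ y).
  by move=> y /ha [].
have hi' : forall y, y \in R -> I (B (comp_of H y)) (a_ y).
  by move=> y /hi [].
exists (\sum_(y in R) a_ y + p2); split; first exact: fix_sum.
rewrite /phimap; congr pair; last exact: extractc.
apply: functional_extensionality => y; case: ifP => yR; last by have := h2 y; rewrite yR /= => ->.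
have yy := comp_self (R_sobj RH yR).
rewrite (sum_at hi' h3 yR yy); last by rewrite (eidem UPA).
by case: (ha y yR).
Qed.

End Main.

Unset Implicit Arguments.
Set Strict Implicit.

Theorem corollary3p4 (G : groupoid) (S : pzRingType)
  (e : gMor G -> S) (alpha : gMor G -> S -> S)
  (H : {set gMor G}) (R : {set gObj G}) :
  gconnected G ->
  unital_partial_action e alpha ->
  group_type e ->
  subgroupoid H ->
  group_type_sub e H ->
  representatives H R ->
  ((forall a : S, fixed_by e alpha H a <->
      exists (a_ : gObj G -> S) (c : S),
        [/\ (forall y, y \in R -> comp_inv e alpha H (comp_of H y) (a_ y)),
            compl_part e H c &
            a = \sum_(y in R) a_ y + c]) /\
   (forall (a_ b_ : gObj G -> S) (c d : S),
      (forall y, y \in R -> inIdeal (blockid e (comp_of H y)) (a_ y)) ->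
      (forall y, y \in R -> inIdeal (blockid e (comp_of H y)) (b_ y)) ->
      compl_part e H c -> compl_part e H d ->
      \sum_(y in R) a_ y + c = \sum_(y in R) b_ y + d ->
      (forall y, y \in R -> a_ y = b_ y) /\ c = d)) /\
  (exists phi : S -> (gObj G -> S) * S,
    [/\ (forall a, fixed_by e alpha H a -> dsum_target e alpha H R (phi a)),
        (forall a b, fixed_by e alpha H a -> fixed_by e alpha H b ->
           phi a = phi b -> a = b),
        (forall p, dsum_target e alpha H R p ->
           exists a, fixed_by e alpha H a /\ phi a = p),
        (forall a b, fixed_by e alpha H a -> fixed_by e alpha H b ->
           phi (a + b) = dsum_add (phi a) (phi b) /\
           phi (a * b) = dsum_mul (phi a) (phi b)) &
        phi 1 = dsum_one e H R]).
Proof.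
move=> _ UPA _ SH GTS RH; split; first split.
- exact: part1.
- move=> a_ b_ c d; apply: (@part1b G S e alpha UPA H R SH RH).
exists (phimap e H R); split.
- exact: phi_target.
- exact: phi_inj.
- exact: phi_surj.
- move=> a b _ _; exact: (@phi_hom G S e alpha UPA H R a b).
- exact: (@phi_one G S e H R).
Qed.
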